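(* Let $\Lambda$ be a cohomology algebra of $b^+=1$ type with $I_T=0$ and $\Gamma\cong\langle1\rangle\oplus n\langle-1\rangle$, $0\le n\le9$, with orthogonal basis $\{H,E_1,\dots,E_n\}$, $H\cdot H=1$, $E_i\cdot E_i=-1$. Let $A=aH-\sum_{i=1}^nb_iE_i\ne0$ be reduced with $A\cdot A\ge0$. Then $h(A)=0$ exactly when $A\in\{H-E_1,\ H,\ 2H\}$ or $a=b_1+1$ with $b_1\ge1$, $b_2\in\{0,1\}$, $b_i=0$ for $i\ge3$; and $h(A)<0$ exactly when $A=a(H-E_1)$ with $a\ge2$. For all other such $A$, $h(A)>0$.
   Context: Notation: $\Lambda$ a cohomology algebra (graded commutative algebra over $\mathbb{Z}$, free of finite rank in each degree, $p:\Lambda^4\cong\mathbb{Z}$ with perfect pairings); $\Gamma(x,y)=x\cdot y=p(xy)$ on $\Lambda^2$, signature $\sigma$; $I_T\subseteq\Lambda^2$ generated by products of elements of $\Lambda^1$. Characteristic: $c\cdot A\equiv A\cdot A\pmod 2$ for all $A$. Since $I_T=0$, adjunction classes are the characteristic $c$ with $c\cdot c>\sigma$. $h_c(A)=1+\frac{A\cdot A-|c\cdot A|}{2}$ for $A\ne0$, $h_c(0)=0$; $h(A)=\max_c h_c(A)$ over adjunction classes. $A=aH-\sum b_iE_i$ is reduced if $b_1\ge\dots\ge b_n\ge0$ and $a\ge b_1$ ($n=1$), $a\ge b_1+b_2$ ($n=2$), $a\ge b_1+b_2+b_3$ ($n\ge3$), $a\ge0$ ($n=0$); coefficients $b_i$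 with $i>n$ are taken to be $0$. *)

(* Defs.v *)
From HB Require Import structures.
From mathcomp Require Import all_boot all_order all_algebra.
Set Implicit Arguments. Unset Strict Implicit. Unset Printing Implicit Defensive.
Import Order.TTheory GRing.Theory Num.Theory.
Local Open Scope ring_scope.

(* An element of Lambda^2 ~ Gamma = <1> + n<-1>, written in the orthogonal
   basis {H, E_1, ..., E_n} as  a H - sum_i b_i E_i ; the pair (a, b). *)
Definition cls (n : nat) := (int * ('I_n -> int))%type.

Definition dot n (A C : cls n) : int :=
  A.1 * C.1 - \sum_(i < n) A.2 i * C.2 i.

(* 1-based coefficient b_k, with b_k = 0 for k = 0 or k > n. *)
Definition bcoef n (A : cls n) (k : nat) : int :=
  if k is k'.+1 then
    (if @insub _ (fun m : nat => (m < n)%N) 'I_n k' is Some i then A.2 i else 0)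
  else 0.

Definition nonzero_cls n (A : cls n) : Prop :=
  A.1 <> 0 \/ exists i, A.2 i <> 0.

Definition characteristic n (c : cls n) : Prop :=
  forall A : cls n, (dot c A == dot A A %[mod 2])%Z.

(* Signature of <1> + n<-1> is 1 - n. Since I_T = 0, adjunction classes are
   the characteristic c with c.c > sigma. *)
Definition adjunction_class n (c : cls n) : Prop :=
  characteristic c /\ (1 - n%:Z) < dot c c.

(* h_c(A) = 1 + (A.A - |c.A|)/2 for A <> 0, h_c(0) = 0.  The division is
   exact for characteristic c. *)
Definition hc n (c A : cls n) : int :=
  if (A.1 == 0) && [forall i, A.2 i == 0] then 0
  else 1 + ((dot A A - `|dot c A|) %/ 2)%Z.

Definition is_h n (A : cls n) (m : int) : Prop :=
  (exists c, adjunction_class c /\ hc c A = m) /\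
  (forall c, adjunction_class c -> hc c A <= m).

Definition reduced n (A : cls n) : Prop :=
  (forall i j : 'I_n, (i <= j)%N -> A.2 j <= A.2 i) /\
  (forall i : 'I_n, 0 <= A.2 i) /\
  (match n with
   | 0 => 0 <= A.1
   | 1 => bcoef A 1 <= A.1
   | 2 => bcoef A 1 + bcoef A 2 <= A.1
   | _ => bcoef A 1 + bcoef A 2 + bcoef A 3 <= A.1
   end).

Definition h_zero_case n (A : cls n) : Prop :=
  (A.1 = 1 /\ bcoef A 1 = 1 /\ forall k, (2 <= k)%N -> bcoef A k = 0) \/
  (A.1 = 1 /\ forall k, bcoef A k = 0) \/
  (A.1 = 2 /\ forall k, bcoef A k = 0) \/
  (A.1 = bcoef A 1 + 1 /\ 1 <= bcoef A 1 /\
   (bcoef A 2 = 0 \/ bcoef A 2 = 1) /\ forall k, (3 <= k)%N -> bcoef A k = 0).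

Definition h_neg_case n (A : cls n) : Prop :=
  2 <= A.1 /\ bcoef A 1 = A.1 /\ forall k, (2 <= k)%N -> bcoef A k = 0.

(* Main.v *)
Require Import Defs.
From HB Require Import structures.
From mathcomp Require Import all_boot all_order all_algebra zify ring lra.
Import Order.TTheory GRing.Theory Num.Theory.
Local Open Scope ring_scope.
Set Implicit Arguments. Unset Strict Implicit.

Section B.
Variable n : nat.
Implicit Types A B c : cls n.

Lemma bcoef_ord A (i : 'I_n) : bcoef A i.+1 = A.2 i.
Proof. rewrite /bcoef; case: insubP => [j _ hj|]; last by rewrite ltn_ord. by have -> : j = i by apply: val_inj. Qed.

Lemma bcoef_out A k : (n <= k)%N -> bcoef A k.+1 = 0.
Proof. by move=> h; rewrite /bcoef insubF // ltnNge h. Qed.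

Lemma sum_conv A B :
  \sum_(i < n) A.2 i * B.2 i = \sum_(k < n) bcoef A k.+1 * bcoef B k.+1.
Proof. by apply: eq_bigr => i _; rewrite !bcoef_ord. Qed.

Lemma widen9 (G : nat -> int) : (n <= 9)%N -> (forall k, (n <= k)%N -> G k = 0) ->
  \sum_(k < n) G k = \sum_(k < 9) G k.
Proof.
move=> hn hG; rewrite (big_ord_widen _ _ hn) big_mkcond; apply: eq_bigr => i _.
by case: ifP => // /negbT; rewrite -leqNgt => h; rewrite hG.
Qed.

End B.

Lemma sum9 (G : nat -> int) : \sum_(k < 9) G k =
  G 0%N + G 1%N + G 2%N + G 3%N + G 4%N + G 5%N + G 6%N + G 7%N + G 8%N.
Proof. by rewrite !big_ord_recr big_ord0 /= add0r. Qed.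

Definition Kc n : cls n := (3, fun _ => 1).

Lemma dot_AA n (A : cls n) : (n <= 9)%N ->
  dot A A = A.1 * A.1 - \sum_(k < 9) bcoef A k.+1 * bcoef A k.+1.
Proof.
move=> hn; rewrite /dot sum_conv; congr (_ - _); apply: (widen9 (G := fun k => bcoef A k.+1 * bcoef A k.+1)) => // k hk; by rewrite bcoef_out // mul0r.
Qed.

Lemma dot_KA n (A : cls n) : (n <= 9)%N ->
  dot (Kc n) A = 3 * A.1 - \sum_(k < 9) bcoef A k.+1.
Proof.
move=> hn; rewrite /dot; congr (_ - _).
rewrite (eq_bigr (fun i : 'I_n => bcoef A i.+1)); last by move=> i _; rewrite mul1r bcoef_ord.
apply: (widen9 (G := fun k => bcoef A k.+1)) => // k hk; exact: bcoef_out.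
Qed.

Lemma dot_KK n : dot (Kc n) (Kc n) = 9 - n%:Z.
Proof.
rewrite /dot /= (eq_bigr (fun _ => 1)); last by move=> i _; rewrite mulr1.
by rewrite sumr_const card_ord -natz.
Qed.

Lemma evz (z : int) : (2 %| z * z - z)%Z.
Proof.
have := divz_eq z 2; have := @modz_ge0 z 2 isT; have := @ltz_pmod z 2 isT.
set q := (z %/ 2)%Z; set r := (z %% 2)%Z => h1 h2 hz.
have : r = 0 \/ r = 1 by lia.
case=> hr; rewrite hz hr; apply/dvdzP; [exists (q * (q*2 - 1)) | exists (q*(q*2+1))]; ring.
Qed.

Lemma charK n : characteristic (Kc n).
Proof.
move=> B; rewrite eqz_mod_dvd.
have -> : dot (Kc n) B - dot B B = 2*B.1 - (B.1*B.1 - B.1) + \sum_(i < n) (B.2 i * B.2 i - B.2 i).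
  rewrite /dot sumrB /= (eq_bigr (fun i => B.2 i) (F1 := fun i => 1 * B.2 i)); last by move=> i _; rewrite mul1r.
  ring.
apply: rpredD; first apply: rpredB; first by apply/dvdzP; exists B.1; ring.
  exact: evz.
by apply: rpred_sum => i _; exact: evz.
Qed.
Lemma ff1 (f : int) : 0 <= f * (f + 1).
Proof. case: (lerP 0 f) => h; nia. Qed.

Lemma L1 (u g : int) : 0 <= u -> g * (g+1) <= u^+2 + 3*u + 1 -> g <= u.
Proof. move=> hu h. rewrite expr2 in h. nia. Qed.

Lemma L2 (u g0 g1 : int) : 0 <= u ->
  g0 * (g0+1) + g1 * (g1+1) <= u^+2 + 3*u + 1 -> g0 + g1 <= 2 * u.
Proof. move=> hu h. rewrite expr2 in h.
have := sqr_ge0 (g0 - g1). rewrite expr2 => h1.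
case: (lerP (g0+g1) (2*u)) => // h2.
have : 0 <= (g0 + g1 - 2*u - 1) * (g0+g1+2*u+1) by apply: mulr_ge0; lia.
nia. Qed.

Lemma L9 (u g0 g1 g2 g3 g4 g5 g6 g7 g8 : int) : 0 <= u ->
  g0 * (g0+1) + g1 * (g1+1) + g2 * (g2+1) + g3 * (g3+1) + g4 * (g4+1)
  + g5 * (g5+1) + g6 * (g6+1) + g7 * (g7+1) + g8 * (g8+1) <= u^+2 + 3*u + 1 ->
  g0 + g1 + g2 + g3 + g4 + g5 + g6 + g7 + g8 <= 3 * u.
Proof. move=> hu h. rewrite expr2 in h.
set s := g0 + g1 + g2 + g3 + g4 + g5 + g6 + g7 + g8.
have := sqr_ge0 (9*g0 - s). have := sqr_ge0 (9*g1 - s).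
have := sqr_ge0 (9*g2 - s). have := sqr_ge0 (9*g3 - s).
have := sqr_ge0 (9*g4 - s). have := sqr_ge0 (9*g5 - s).
have := sqr_ge0 (9*g6 - s). have := sqr_ge0 (9*g7 - s).
have := sqr_ge0 (9*g8 - s). rewrite !expr2 /s => *.
case: (lerP (g0 + g1 + g2 + g3 + g4 + g5 + g6 + g7 + g8) (3*u)) => // h2.
have : 0 <= (g0 + g1 + g2 + g3 + g4 + g5 + g6 + g7 + g8 - 3*u - 1) *
   (g0 + g1 + g2 + g3 + g4 + g5 + g6 + g7 + g8 + 3*u + 1) by apply: mulr_ge0; lia.
lia. Qed.

Lemma key (u a f0 f1 f2 f3 f4 f5 f6 f7 f8 b0 b1 b2 b3 b4 b5 b6 b7 b8 : int) :
  0 <= u ->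
  f0 * (f0+1) + f1 * (f1+1) + f2 * (f2+1) + f3 * (f3+1) + f4 * (f4+1)
  + f5 * (f5+1) + f6 * (f6+1) + f7 * (f7+1) + f8 * (f8+1) <= u^+2 + 3*u + 1 ->
  b1 <= b0 -> b2 <= b1 -> b3 <= b2 -> b4 <= b3 -> b5 <= b4 -> b6 <= b5 ->
  b7 <= b6 -> b8 <= b7 -> 0 <= b8 -> b0 + b1 + b2 <= a ->
  f0 * b0 + f1 * b1 + f2 * b2 + f3 * b3 + f4 * b4 + f5 * b5 + f6 * b6
  + f7 * b7 + f8 * b8 <= u * a.
Proof.
move=> hu h *.
have := ff1 f0; have := ff1 f1; have := ff1 f2; have := ff1 f3; have := ff1 f4;
have := ff1 f5; have := ff1 f6; have := ff1 f7; have := ff1 f8 => *.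
have P0 : f0 <= u by apply: L1 => //; lia.
have P1 : f0 + f1 <= 2 * u by apply: L2 => //; lia.
have P2 : f0+f1+f2+0+0+0+0+0+0 <= 3 * u by apply: L9 => //; lia.
have P3 : f0+f1+f2+f3+0+0+0+0+0 <= 3 * u by apply: L9 => //; lia.
have P4 : f0+f1+f2+f3+f4+0+0+0+0 <= 3 * u by apply: L9 => //; lia.
have P5 : f0+f1+f2+f3+f4+f5+0+0+0 <= 3 * u by apply: L9 => //; lia.
have P6 : f0+f1+f2+f3+f4+f5+f6+0+0 <= 3 * u by apply: L9 => //; lia.
have P7 : f0+f1+f2+f3+f4+f5+f6+f7+0 <= 3 * u by apply: L9 => //; lia.
have P8 : f0+f1+f2+f3+f4+f5+f6+f7+f8 <= 3 * u by apply: L9 => //; lia.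
have Q0 : 0 <= (b0 - b1) * (u - f0) by apply: mulr_ge0; lia.
have Q1 : 0 <= (b1 - b2) * (2*u - (f0+f1)) by apply: mulr_ge0; lia.
have Q2 : 0 <= (b2 - b3) * (3*u - (f0+f1+f2)) by apply: mulr_ge0; lia.
have Q3 : 0 <= (b3 - b4) * (3*u - (f0+f1+f2+f3)) by apply: mulr_ge0; lia.
have Q4 : 0 <= (b4 - b5) * (3*u - (f0+f1+f2+f3+f4)) by apply: mulr_ge0; lia.
have Q5 : 0 <= (b5 - b6) * (3*u - (f0+f1+f2+f3+f4+f5)) by apply: mulr_ge0; lia.
have Q6 : 0 <= (b6 - b7) * (3*u - (f0+f1+f2+f3+f4+f5+f6)) by apply: mulr_ge0; lia.
have Q7 : 0 <= (b7 - b8) * (3*u - (f0+f1+f2+f3+f4+f5+f6+f7)) by apply: mulr_ge0; lia.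
have Q8 : 0 <= b8 * (3*u - (f0+f1+f2+f3+f4+f5+f6+f7+f8)) by apply: mulr_ge0; lia.
have Q9 : 0 <= u * (a - b0 - b1 - b2) by apply: mulr_ge0; lia.
lia.
Qed.
Lemma cls3 (a b0 b1 : int) : 1 <= a -> 0 <= b1 -> b1 <= b0 -> b0 + b1 <= a ->
  let G := a * a - 3 * a - (b0 * b0 - b0) - (b1 * b1 - b1) in
  (G = -2 <-> (a = 1 /\ b0 = 1 /\ b1 = 0) \/ (a = 1 /\ b0 = 0 /\ b1 = 0) \/
     (a = 2 /\ b0 = 0 /\ b1 = 0) \/ (a = b0 + 1 /\ 1 <= b0 /\ (b1 = 0 \/ b1 = 1)))
  /\ (G < -2 <-> 2 <= a /\ b0 = a /\ b1 = 0).
Proof.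
move=> ha hb1 hb0 hab G.
have [t ht] : exists t, a = b0 + b1 + t by exists (a - b0 - b1); ring.
have tge : 0 <= t by lia.
have EG : G = 2*b0*b1 + 2*t*(b0+b1) + t*t - 2*b0 - 2*b1 - 3*t by rewrite /G ht; ring.
case: (lerP t 2) => ht2.
- have : t = 0 \/ t = 1 \/ t = 2 by lia.
  case=> [t0|[t1|t2]]; rewrite {}EG; subst t.
  + case: (lerP b1 0) => h1.
    * have -> : b1 = 0 by lia. lia.
    * case: (lerP b1 1) => h1'.
      -- have -> : b1 = 1 by lia. lia.
      -- have : 0 <= (b0 - 2) * (b1 - 2) by apply: mulr_ge0; lia. lia.
  + case: (lerP b1 0) => h1.
    * have -> : b1 = 0 by lia. lia.
    * have : 0 <= (b0 - 1) * (b1 - 1) by apply: mulr_ge0; lia. lia.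
  + case: (lerP b1 0) => h1.
    * have -> : b1 = 0 by lia. lia.
    * have : 0 <= b0 * b1 by apply: mulr_ge0; lia. lia.
- have : 0 <= (t - 3) * t by apply: mulr_ge0; lia.
  have : 0 <= b0 * b1 by apply: mulr_ge0; lia.
  have : 0 <= (t - 3) * (b0 + b1) by apply: mulr_ge0; lia.
  lia.
Qed.

Lemma cls9 (a b0 b1 b2 b3 b4 b5 b6 b7 b8 : int) : 1 <= a ->
  b1 <= b0 -> b2 <= b1 -> b3 <= b2 -> b4 <= b3 -> b5 <= b4 -> b6 <= b5 ->
  b7 <= b6 -> b8 <= b7 -> 0 <= b8 -> b0 + b1 + b2 <= a ->
  let G := a * a - 3 * a - ((b0 * b0 - b0) + (b1 * b1 - b1) + (b2 * b2 - b2)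
     + (b3 * b3 - b3) + (b4 * b4 - b4) + (b5 * b5 - b5) + (b6 * b6 - b6)
     + (b7 * b7 - b7) + (b8 * b8 - b8)) in
  let Z := b2 = 0 /\ b3 = 0 /\ b4 = 0 /\ b5 = 0 /\ b6 = 0 /\ b7 = 0 /\ b8 = 0 in
  (G = -2 <-> (a = 1 /\ b0 = 1 /\ b1 = 0 /\ Z) \/ (a = 1 /\ b0 = 0 /\ b1 = 0 /\ Z) \/
     (a = 2 /\ b0 = 0 /\ b1 = 0 /\ Z) \/
     (a = b0 + 1 /\ 1 <= b0 /\ (b1 = 0 \/ b1 = 1) /\ Z))
  /\ (G < -2 <-> 2 <= a /\ b0 = a /\ b1 = 0 /\ Z).
Proof.
move=> ha h1 h2 h3 h4 h5 h6 h7 h8 h9 hab G Z.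
case: (lerP b2 0) => hc.
- have e2 : b2 = 0 by lia. have e3 : b3 = 0 by lia. have e4 : b4 = 0 by lia.
  have e5 : b5 = 0 by lia. have e6 : b6 = 0 by lia. have e7 : b7 = 0 by lia.
  have e8 : b8 = 0 by lia.
  have hZ : Z by rewrite /Z; lia.
  have := @cls3 a b0 b1 ha ltac:(lia) h1 ltac:(lia).
  have -> : G = a * a - 3 * a - (b0 * b0 - b0) - (b1 * b1 - b1).
    by rewrite /G e2 e3 e4 e5 e6 e7 e8; ring.
  move: hZ; rewrite /Z; clear Z; move=> hZ; tauto.
- have hZ : ~ Z by rewrite /Z; lia.
  suff : 0 <= G by split; split; try lia; tauto.
  have : 0 <= (b2 - b3) * (b2 + b3 - 1) by apply: mulr_ge0; lia.
  have : 0 <= (b2 - b4) * (b2 + b4 - 1) by apply: mulr_ge0; lia.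
  have : 0 <= (b2 - b5) * (b2 + b5 - 1) by apply: mulr_ge0; lia.
  have : 0 <= (b2 - b6) * (b2 + b6 - 1) by apply: mulr_ge0; lia.
  have : 0 <= (b2 - b7) * (b2 + b7 - 1) by apply: mulr_ge0; lia.
  have : 0 <= (b2 - b8) * (b2 + b8 - 1) by apply: mulr_ge0; lia.
  have : 0 <= (a - (b0+b1+b2)) * (a + (b0+b1+b2) - 3) by apply: mulr_ge0; lia.
  have : 0 <= (b2 - 1) * (b0 - b2) by apply: mulr_ge0; lia.
  have : 0 <= (b2 - 1) * (b1 - b2) by apply: mulr_ge0; lia.
  have : 0 <= (b0 - b2) * (b1 - b2) by apply: mulr_ge0; lia.
  rewrite /G; lia.
Qed.

Lemma char_x n (c : cls n) : characteristic c -> exists q, c.1 = q * 2 + 1.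
Proof.
move/(_ (1, fun _ => 0)); rewrite eqz_mod_dvd /dot /=.
have h0 : forall (F : 'I_n -> int), \sum_(i < n) F i * 0 = 0.
  by move=> F; rewrite big1 // => i _; rewrite mulr0.
rewrite !h0 => /dvdzP [q hq]; exists q; lia.
Qed.

Lemma char_y n (c : cls n) (i : 'I_n) : characteristic c -> exists q, c.2 i = q * 2 + 1.
Proof.
move/(_ (0, fun j => (j == i)%:R)); rewrite eqz_mod_dvd /dot /=.
have s1 : \sum_(j < n) c.2 j * (j == i)%:R = c.2 i.
  rewrite (bigD1 i) //= eqxx mulr1 big1 ?addr0 // => j /negbTE ->; by rewrite mulr0.
have s2 : \sum_(j < n) (j == i)%:R * (j == i)%:R = 1 :> int.
  rewrite (bigD1 i) //= eqxx mulr1 big1 ?addr0 // => j /negbTE ->; by rewrite mulr0.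
rewrite s1 s2 => /dvdzP [q hq]; exists (- q); lia.
Qed.

Lemma red_nonneg n (A : cls n) k : reduced A -> 0 <= bcoef A k.
Proof.
move=> hr; case: k => [//|k]; case: (ltnP k n) => h.
  have e : bcoef A k.+1 = A.2 (Ordinal h) := bcoef_ord A (Ordinal h); rewrite e; exact: hr.2.1.
by rewrite bcoef_out.
Qed.

Lemma red_sorted n (A : cls n) k : reduced A -> bcoef A k.+2 <= bcoef A k.+1.
Proof.
move=> hr; case: (ltnP k.+1 n) => h.
  have e1 : bcoef A k.+2 = A.2 (Ordinal h) := bcoef_ord A (Ordinal h).
  have e2 : bcoef A k.+1 = A.2 (Ordinal (ltnW h)) := bcoef_ord A (Ordinal (ltnW h)).
  rewrite e1 e2; apply: hr.1 => /=; exact: leqnSn.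
rewrite bcoef_out //; exact: red_nonneg.
Qed.

Lemma red_le1 n (A : cls n) k : reduced A -> bcoef A k.+1 <= bcoef A 1.
Proof.
move=> hr; elim: k => [//|k ih]; exact: le_trans (red_sorted k hr) ih.
Qed.

Lemma red_sum n (A : cls n) : reduced A -> bcoef A 1 + bcoef A 2 + bcoef A 3 <= A.1.
Proof.
move: A; case: n => [|[|[|n]]] A [_ [_ h]] //.
- by rewrite !bcoef_out.
- by rewrite (@bcoef_out _ A 1) ?(@bcoef_out _ A 2) // addr0 addr0.
- by rewrite (@bcoef_out _ A 2) // addr0.
Qed.

Lemma nz_pos n (A : cls n) : reduced A -> nonzero_cls A -> 1 <= A.1.
Proof.
move=> hr hnz; have hs := red_sum hr.
have h1 := red_nonneg 1 hr; have h2 := red_nonneg 2 hr; have h3 := red_nonneg 3 hr.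
case: (lerP 1 A.1) => // ha.
have a0 : A.1 = 0 by lia.
case: hnz => [//|[i hi]]; exfalso; apply: hi.
have := red_le1 i hr; have := red_nonneg i.+1 hr; rewrite bcoef_ord; lia.
Qed.

Lemma lowb n (A c : cls n) : (n <= 9)%N -> reduced A -> adjunction_class c ->
  0 <= c.1 -> dot (Kc n) A <= dot c A.
Proof.
move=> hn hr [hc hadj] hx.
have [q hq] := char_x hc.
pose f k := if (k < n)%N then ((bcoef c k.+1 - 1) %/ 2)%Z else 0.
have hf : forall i : 'I_n, c.2 i = 2 * f i + 1.
  move=> i; rewrite /f ltn_ord bcoef_ord; have [r ->] := char_y i hc.
  rewrite addrK mulzK //; ring.
have fout : forall k, (n <= k)%N -> f k = 0 by move=> k hk; rewrite /f ltnNge hk.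
have ecc : dot c c = c.1 * c.1 - (n%:Z + 4 * \sum_(k < 9) f k * (f k + 1)).
  rewrite /dot; congr (_ - _).
  rewrite (eq_bigr (fun i : 'I_n => 4 * (f i * (f i + 1)) + 1)); last by move=> i _; rewrite hf; ring.
  rewrite big_split /= sumr_const card_ord -mulr_sumr.
  rewrite (widen9 (G := fun k => f k * (f k + 1))) // ?natz; first ring.
  by move=> k hk; rewrite fout // mul0r.
have ecA : dot c A = c.1 * A.1 - \sum_(k < 9) (2 * f k + 1) * bcoef A k.+1.
  rewrite /dot; congr (_ - _).
  rewrite (eq_bigr (fun i : 'I_n => (2 * f i + 1) * bcoef A i.+1)); last by move=> i _; rewrite hf bcoef_ord.
  apply: (widen9 (G := fun k => (2 * f k + 1) * bcoef A k.+1)) => // k hk.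
  by rewrite bcoef_out // mulr0.
move: hadj; rewrite ecA dot_KA // ecc (sum9 (fun k => f k * (f k + 1)))
  (sum9 (fun k => (2 * f k + 1) * bcoef A k.+1)) (sum9 (fun k => bcoef A k.+1)) => hadj.
have := ff1 (f 0%N); have := ff1 (f 1%N); have := ff1 (f 2%N); have := ff1 (f 3%N);
have := ff1 (f 4%N); have := ff1 (f 5%N); have := ff1 (f 6%N); have := ff1 (f 7%N);
have := ff1 (f 8%N) => *.
have hq1 : 1 <= q by nia.
have := red_sum hr.
have := red_sorted 0 hr; have := red_sorted 1 hr; have := red_sorted 2 hr;
have := red_sorted 3 hr; have := red_sorted 4 hr; have := red_sorted 5 hr;
have := red_sorted 6 hr; have := red_sorted 7 hr; have := red_nonneg 9 hr => *.
have hk := @key (q - 1) A.1 (f 0%N) (f 1%N) (f 2%N) (f 3%N) (f 4%N) (f 5%N) (f 6%N) (f 7%N) (f 8%N)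
  (bcoef A 1) (bcoef A 2) (bcoef A 3) (bcoef A 4) (bcoef A 5) (bcoef A 6) (bcoef A 7) (bcoef A 8) (bcoef A 9).
move: hadj; rewrite hq => hadj.
have := hk ltac:(lia) ltac:(rewrite expr2; lia).
lia.
Qed.

Lemma all2 (F : nat -> int) : (forall k, (10 <= k)%N -> F k = 0) ->
  ((forall k, (2 <= k)%N -> F k = 0) <->
   F 2%N = 0 /\ F 3%N = 0 /\ F 4%N = 0 /\ F 5%N = 0 /\ F 6%N = 0 /\ F 7%N = 0
   /\ F 8%N = 0 /\ F 9%N = 0).
Proof.
move=> hF; split; first by move=> h; do 7 (split; first exact: h); exact: h.
move=> H k; do 10 (case: k => [|k]; first by lia).
move=> _; apply: hF; lia.
Qed.

Lemma all3 (F : nat -> int) : (forall k, (10 <= k)%N -> F k = 0) ->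
  ((forall k, (3 <= k)%N -> F k = 0) <->
   F 3%N = 0 /\ F 4%N = 0 /\ F 5%N = 0 /\ F 6%N = 0 /\ F 7%N = 0
   /\ F 8%N = 0 /\ F 9%N = 0).
Proof.
move=> hF; split; first by move=> h; do 6 (split; first exact: h); exact: h.
move=> H k; do 10 (case: k => [|k]; first by lia).
move=> _; apply: hF; lia.
Qed.

Lemma all0 (F : nat -> int) : (forall k, (10 <= k)%N -> F k = 0) -> F 0%N = 0 ->
  ((forall k, F k = 0) <->
   F 1%N = 0 /\ F 2%N = 0 /\ F 3%N = 0 /\ F 4%N = 0 /\ F 5%N = 0 /\ F 6%N = 0 /\ F 7%N = 0
   /\ F 8%N = 0 /\ F 9%N = 0).
Proof.
move=> hF h0; split; first by move=> h; do 8 (split; first exact: h); exact: h.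
move=> H k; do 10 (case: k => [|k]; first by lia).
apply: hF; lia.
Qed.

Unset Implicit Arguments.
Set Strict Implicit.

Theorem mainTheorem11 (n : nat) (A : cls n) :
  (n <= 9)%N -> nonzero_cls A -> reduced A -> 0 <= dot A A ->
  exists m : int, is_h A m /\
    (m = 0 <-> h_zero_case A) /\
    (m < 0 <-> h_neg_case A) /\
    (0 < m <-> ~ h_zero_case A /\ ~ h_neg_case A).
Proof.
move=> hn hnz hr _.
have hout : forall k, (10 <= k)%N -> bcoef A k = 0.
  move=> k; case: k => [//|k] hk; apply: bcoef_out; lia.
have ha := nz_pos hr hnz.
have s0 := red_sum hr.
have s1 := red_sorted 0 hr; have s2 := red_sorted 1 hr; have s3 := red_sorted 2 hr;
have s4 := red_sorted 3 hr; have s5 := red_sorted 4 hr; have s6 := red_sorted 5 hr;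
have s7 := red_sorted 6 hr; have s8 := red_sorted 7 hr; have s9 := red_nonneg 9 hr.
have eAA := dot_AA A hn; rewrite (sum9 (fun k => bcoef A k.+1 * bcoef A k.+1)) in eAA.
have eKA := dot_KA A hn; rewrite (sum9 (fun k => bcoef A k.+1)) in eKA.
have hKA : 0 <= dot (Kc n) A by rewrite eKA; lia.
have [w hw] : exists w, dot A A - dot (Kc n) A = w * 2.
  have := charK A; rewrite eqz_mod_dvd => /dvdzP [q hq]; exists (-q); lia.
have hKadj : adjunction_class (Kc n) by split; [exact: charK | rewrite dot_KK; lia].
have hnot : ((A.1 == 0) && [forall i, A.2 i == 0]) = false.
  have : A.1 != 0 by apply/eqP; lia.
  by move/negbTE => ->.
have hcA : forall c, adjunction_class c -> dot (Kc n) A <= `|dot c A|.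
  move=> c hc; case: (lerP 0 c.1) => h.
    exact: le_trans (lowb hn hr hc h) (ler_norm _).
  pose cn : cls n := (- c.1, fun i => - c.2 i).
  have dn : forall B, dot cn B = - dot c B.
    move=> B; rewrite /dot /= (eq_bigr (fun i => - (c.2 i * B.2 i))); last by move=> i _; rewrite mulNr.
    rewrite sumrN; ring.
  have dnn : dot cn cn = dot c c.
    rewrite /dot /= (eq_bigr (fun i => c.2 i * c.2 i)); last by move=> i _; rewrite mulrNN.
    ring.
  have hcn : adjunction_class cn.
    case: hc => hch hca; split; last by rewrite dnn.
    move=> B; rewrite dn; move: (hch B); rewrite !eqz_mod_dvd => /dvdzP [q hq].
    apply/dvdzP; exists (- q - dot B B); lia.
  rewrite -normrN -dn; apply: le_trans (lowb hn hr hcn _) (ler_norm _) => /=; lia.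
exists (1 + w).
have eG : A.1 * A.1 - 3 * A.1 - ((bcoef A 1 * bcoef A 1 - bcoef A 1) + (bcoef A 2 * bcoef A 2 - bcoef A 2)
     + (bcoef A 3 * bcoef A 3 - bcoef A 3) + (bcoef A 4 * bcoef A 4 - bcoef A 4)
     + (bcoef A 5 * bcoef A 5 - bcoef A 5) + (bcoef A 6 * bcoef A 6 - bcoef A 6)
     + (bcoef A 7 * bcoef A 7 - bcoef A 7) + (bcoef A 8 * bcoef A 8 - bcoef A 8)
     + (bcoef A 9 * bcoef A 9 - bcoef A 9)) = w * 2 by lia.
have [H1 H2] := @cls9 A.1 (bcoef A 1) (bcoef A 2) (bcoef A 3) (bcoef A 4) (bcoef A 5)
  (bcoef A 6) (bcoef A 7) (bcoef A 8) (bcoef A 9) ha s1 s2 s3 s4 s5 s6 s7 s8 s9 s0.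
rewrite eG in H1 H2.
have HZ : h_zero_case A <-> w * 2 = -2.
  move: (all2 hout) (all3 hout) (all0 hout (erefl _)) H1; rewrite /h_zero_case; tauto.
have HN : h_neg_case A <-> w * 2 < -2.
  move: (all2 hout) H2; rewrite /h_neg_case; tauto.
clear H1 H2.
split.
  split.
    exists (Kc n); split; first exact: hKadj.
    rewrite /hc hnot /= ger0_norm // hw mulzK //.
  move=> c hcc; rewrite /hc hnot /= lerD2l -(@mulzK w 2) // -hw.
  apply: lez_pdiv2r => //; apply: lerB; [exact: lexx | exact: hcA].
split; first by split => [h|/HZ h]; [apply/HZ; lia | lia].
split; first by split => [h|/HN h]; [apply/HN; lia | lia].
split => [h|[h1 h2]]; first by split => [/HZ|/HN]; lia.
case: (ltrgtP 0 (1 + w)) => // h.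
  by exfalso; apply: h2; apply/HN; lia.
by exfalso; apply: h1; apply/HZ; lia.
Qed.
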